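(* For every $\alpha>0$ there is $L_0$ such that for every integer $L\geq L_0$ there is $\vartheta_0>0$ such that for every $0<\vartheta\leq\vartheta_0$ there is $n_0$ such that for all $n\geq n_0$ the following holds. Let $H=([n],E)$ be a $3$-uniform hypergraph with $d(i,j)\geq\min\left(i,j,\frac{n}{2}\right)+\alpha n$ for all $\{i,j\}\in[n]^{(2)}$, and let $\mathcal{R}\subseteq[n]$ be a set with $\frac{\vartheta^2}{2}n\leq|\mathcal{R}|\leq\vartheta^2 n$ such that for all disjoint ordered pairs of distinct vertices $(x,y),(w,z)\in[n]^2$ there are at least $\vartheta|\mathcal{R}|^{L-2}/2$ tight paths of length $L$ in $H$ connecting $(x,y)$ and $(w,z)$ with all internal vertices in $\mathcal{R}$. If $\mathcal{R}'\subseteq\mathcal{R}$ with $|\mathcal{R}'|\leq 2\vartheta^4 n$, then for all disjoint ordered pairs of distinct vertices $(x,y),(w,z)\in[n]^2$ there is a tight $(x,y)$-$(w,z)$-path of length $L$ in $H$ with all internal vertices belonging to $\mathcal{R}\setminus\mathcal{R}'$.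
   Context: Vertices are the integers $[n]$, compared as integers. $d(v,w)=|\{x: \{v,w,x\}\in E\}|$ is the pair degree. A tight path of length $\ell$ (number of edges) is a 3-graph on distinct vertices $x_1,\dots,x_{\ell+2}$ with edges $x_ix_{i+1}x_{i+2}$, $i\in[\ell]$; it is an $(x_1,x_2)$-$(x_{\ell+1},x_{\ell+2})$-path (connects these pairs), and its internal vertices are $x_3,\dots,x_\ell$. *)

(* Defs.v *)
From HB Require Import structures.
From mathcomp Require Import all_boot all_order all_algebra.
From mathcomp Require Import reals.
Set Implicit Arguments. Unset Strict Implicit. Unset Printing Implicit Defensive.

(* Vertex set [n] = {1,...,n} is represented by 'I_n : vertex v stands for the
   integer v+1 (see [label]).  A 3-graph is a set E of 3-element subsets. *)

Definition label (n : nat) (v : 'I_n) : nat := (val v).+1.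

Definition uniform3 (n : nat) (E : {set {set 'I_n}}) : Prop :=
  forall e, e \in E -> #|e| = 3.

Definition pair_deg (n : nat) (E : {set {set 'I_n}}) (v w : 'I_n) : nat :=
  #|[set x : 'I_n | [set v; w; x] \in E]|.

(* A tight path of length L is given by its vertex sequence x_1..x_{L+2},
   encoded as an injective map f : 'I_(L+2) -> 'I_n (f i = x_{i+1}),
   with edges x_i x_{i+1} x_{i+2}, i in [L]. *)
Definition tight_path (n : nat) (E : {set {set 'I_n}}) (L : nat)
    (f : {ffun 'I_L.+2 -> 'I_n}) : bool :=
  injectiveb f &&
  [forall i : 'I_L.+2, (val i < L) ==>
     ([set f i; f (inord i.+1); f (inord i.+2)] \in E)].

Definition connecting_path (n : nat) (E : {set {set 'I_n}}) (L : nat)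
    (x y w z : 'I_n) (S : {set 'I_n}) (f : {ffun 'I_L.+2 -> 'I_n}) : bool :=
  [&& tight_path E f,
      f (inord 0) == x, f (inord 1) == y,
      f (inord L) == w, f (inord L.+1) == z &
      [forall i : 'I_L.+2, ((2 <= val i) && (val i < L)) ==> (f i \in S)]].

Definition num_paths (n : nat) (E : {set {set 'I_n}}) (L : nat)
    (x y w z : 'I_n) (S : {set 'I_n}) : nat :=
  #|[set f : {ffun 'I_L.+2 -> 'I_n} | connecting_path E x y w z S f]|.

Definition disj_pairs (n : nat) (x y w z : 'I_n) : bool :=
  [&& x != y, w != z, x != w, x != z, y != w & y != z].

(* Main.v *)
Require Import Defs.
From HB Require Import structures.
From mathcomp Require Import all_boot all_order all_algebra.
From mathcomp Require Import reals.
From mathcomp Require Import zify ring lra.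
Import Order.TTheory GRing.Theory Num.Theory.
Lemma pow_diff (a b m : nat) : b <= a -> a ^ m.+1 <= b ^ m.+1 + m.+1 * (a - b) * a ^ m.
Proof.
move=> ba; elim: m => [|m IH]; first by rewrite !expn1 expn0; lia.
have h1 : b ^ m.+1 <= a ^ m.+1 by rewrite leq_exp2r.
rewrite expnS [b ^ m.+2]expnS [a ^ m.+1]expnS.
set A := a ^ m.+1 in IH h1 *; set B := b ^ m.+1 in IH h1 *.
have : a * A <= a * (B + m.+1 * (a - b) * a ^ m) by rewrite leq_mul2l IH orbT.
have : a * B <= b * B + (a - b) * A.
  have [d ->] : exists d, a = b + d by exists (a - b); lia.
  rewrite (addnC b d) addnK mulnDl addnC leq_add2l leq_mul2l h1 orbT //.
rewrite /A expnS; nia.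
Qed.

Section C.
Variables (n m : nat) (E : {set {set 'I_n}}) (x y w z : 'I_n) (Rs Rs' : {set 'I_n}).

Definition res (f : {ffun 'I_(m.+3).+2 -> 'I_n}) : {ffun 'I_m.+1 -> 'I_n} :=
  [ffun j : 'I_m.+1 => f (inord (j.+2))].

Lemma count_bound :
  Rs' \subset Rs ->
  (forall f : {ffun 'I_(m.+3).+2 -> 'I_n}, ~~ connecting_path E x y w z (Rs :\: Rs') f) ->
  num_paths E m.+3 x y w z Rs <= m.+1 * #|Rs'| * #|Rs| ^ m.
Proof.
move=> sub nog.
set P := [set f : {ffun 'I_(m.+3).+2 -> 'I_n} | connecting_path E x y w z Rs f].
have inj : {in P &, injective res}.
  move=> f g; rewrite !inE.
  case/and5P => _ /eqP f0 /eqP f1 /eqP f2 /andP [/eqP f3 _].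
  case/and5P => _ /eqP g0 /eqP g1 /eqP g2 /andP [/eqP g3 _] eq.
  apply/ffunP => -[[|[|i]] Hi].
  - have -> : Ordinal Hi = inord 0 by apply: val_inj; rewrite /= inordK.
    by rewrite f0 g0.
  - have -> : Ordinal Hi = inord 1 by apply: val_inj; rewrite /= inordK.
    by rewrite f1 g1.
  case: (ltnP i m.+1) => him.
    have := congr1 (fun h : {ffun 'I_m.+1 -> 'I_n} => h (Ordinal him)) eq; rewrite !ffunE /=.
    by have -> : Ordinal Hi = inord i.+2 by apply: val_inj; rewrite /= inordK.
  case: (ltnP i m.+2) => him2.
    have -> : Ordinal Hi = inord m.+3 by apply: val_inj; rewrite /= inordK //; lia.
    by rewrite f2 g2.
  have -> : Ordinal Hi = inord m.+4 by apply: val_inj; rewrite /= inordK //; lia.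
  by rewrite f3 g3.
set A := [set g : {ffun 'I_m.+1 -> 'I_n} | g \in ffun_on Rs].
set B := [set g : {ffun 'I_m.+1 -> 'I_n} | g \in ffun_on (Rs :\: Rs')].
have himg : [set res f | f in P] \subset A :\: B.
  apply/subsetP => _ /imsetP [f fP ->]; rewrite in_setD /A /B !in_set.
  move: (fP); rewrite inE => /and5P [pa pb pc pd /andP [pe /forallP pf]].
  have hA : res f \in ffun_on Rs.
    apply/ffun_onP => j; rewrite ffunE.
    have := pf (inord j.+2); rewrite /= inordK /=; last by case: j => /= j; lia.
    have H2 : (j.+2 < m.+3)%N by case: j => /= j Hj; lia.
    by move/implyP; apply.
  rewrite hA andbT; apply/negP => /ffun_onP hB.
  have := nog f; rewrite /connecting_path pa pb pc pd pe /=.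
  move/negP; apply; apply/forallP => -[i Hi] /=; apply/implyP => /andP [i2 iL].
  have lt : i - 2 < m.+1 by lia.
  have := hB (Ordinal lt); rewrite ffunE /=.
  have -> : Ordinal Hi = inord (i - 2).+2 by apply: val_inj; rewrite /= inordK; lia.
  by rewrite !inE => ->.
have cP : num_paths E m.+3 x y w z Rs = #|P| by [].
have sAB : B \subset A.
  apply/subsetP => g; rewrite !inE => /ffun_onP h; apply/ffun_onP => j.
  by have := h j; rewrite inE => /andP [].
have cA : #|A| = #|Rs| ^ m.+1 by rewrite cardsE card_ffun_on card_ord.
have cB : #|B| = #|Rs :\: Rs'| ^ m.+1 by rewrite cardsE card_ffun_on card_ord.
have cD : #|Rs :\: Rs'| = #|Rs| - #|Rs'| by rewrite cardsD (setIidPr sub).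
have le1 := subset_leq_card himg.
rewrite card_in_imset // cardsD (setIidPr sAB) cA cB in le1.
have r_le : #|Rs'| <= #|Rs| by apply: subset_leq_card.
have := @pow_diff #|Rs| #|Rs :\: Rs'| m (ltac:(rewrite cD leq_subr //)).
rewrite cP.

have -> : #|Rs| - #|Rs :\: Rs'| = #|Rs'| by rewrite cD; lia.
lia.
Qed.
End C.
Local Open Scope ring_scope.

Theorem lemma2p3 (R : realType) :
  forall alpha : R, 0 < alpha ->
  exists L0 : nat, forall L : nat, (L0 <= L)%N ->
  exists theta0 : R, 0 < theta0 /\
  forall theta : R, 0 < theta -> theta <= theta0 ->
  exists n0 : nat, forall n : nat, (n0 <= n)%N ->
  forall (E : {set {set 'I_n}}) (Rs Rs' : {set 'I_n}),
    uniform3 E ->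
    (forall i j : 'I_n, i != j ->
       Num.min (Num.min ((label i)%:R) ((label j)%:R)) (n%:R / 2) + alpha * n%:R
         <= (pair_deg E i j)%:R) ->
    theta ^+ 2 / 2 * n%:R <= (#|Rs|)%:R ->
    (#|Rs|)%:R <= theta ^+ 2 * n%:R ->
    (forall x y w z : 'I_n, disj_pairs x y w z ->
       theta * (#|Rs|)%:R ^+ (L - 2) / 2 <= (num_paths E L x y w z Rs)%:R) ->
    Rs' \subset Rs ->
    (#|Rs'|)%:R <= 2 * theta ^+ 4 * n%:R ->
    forall x y w z : 'I_n, disj_pairs x y w z ->
      exists f : {ffun 'I_L.+2 -> 'I_n},
        connecting_path E x y w z (Rs :\: Rs') f.
Proof.
move=> alpha _; exists 3%N => L L3.
have [m ->] : exists m, L = m.+3 by exists (L - 3)%N; lia.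
have Lpos : (0 : R) < (m.+3)%:R by rewrite ltr0n.
exists (1 / (8 * (m.+3)%:R)); split; first by rewrite divr_gt0 // mulr_gt0.
move=> th th0 thle; exists 0%N => n _ E Rs Rs' _ _ hlo hhi hcount sub hr x y w z dxy.
case: (pickP (fun f : {ffun 'I_(m.+3).+2 -> 'I_n} => connecting_path E x y w z (Rs :\: Rs') f)) => [f hf|none]; first by exists f.
exfalso.
have cb := @count_bound n m E x y w z Rs Rs' sub (fun f => negbT (none f)).
have := hcount x y w z dxy.
have -> : (m.+3 - 2 = m.+1)%N by lia.
move: cb; rewrite -(ler_nat R) => cb hc.
have {hc cb} := le_trans hc cb.
rewrite !natrM !natrX.
have npos : (0 : R) < n%:R by rewrite ltr0n; case: (x) => /= ?; lia.
set a := (#|Rs|)%:R in hlo hhi *; set r := (#|Rs'|)%:R in hr *; set N := n%:R in npos hlo hhi hr *.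
set M := (m.+1)%:R.
have Me : (m.+3)%:R = M + 2 :> R by rewrite /M -!natr1; ring.
rewrite Me in thle.
have M0 : 0 <= M by rewrite /M ler0n.
have t2 : 0 < th ^+ 2 by rewrite exprn_gt0.
have apos : 0 < a by apply: lt_le_trans hlo; rewrite mulr_gt0 // divr_gt0.
have am : 0 < a ^+ m by rewrite exprn_gt0.
move=> h.
have h2 : th * a / 2 <= M * r.
  rewrite -(ler_pM2r am); move: h; rewrite exprS; lra.
have h3 : th * (th ^+ 2 / 2 * N) <= th * a by rewrite ler_pM2l.
have h4 : M * r <= M * (2 * th ^+ 4 * N) by rewrite ler_wpM2l.
have h5 : th ^+ 3 * N / 4 <= 2 * M * th ^+ 4 * N.
  move: h2 h3 h4; rewrite !exprS expr0; lra.
have t3 : 0 < th ^+ 3 * N by rewrite mulr_gt0 // exprn_gt0.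
have h6 : 1 <= 8 * M * th.
  rewrite -(ler_pM2r t3); move: h5; rewrite !exprS expr0; lra.
have h7 : 8 * (M + 2) * th <= 1.
  have p : 0 < 8 * (M + 2) by lra.
  have q := ler_wpM2r (ltW p) thle.
  rewrite mul1r mulVf in q; last by rewrite gt_eqF.
  lra.
lra.
Qed.
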